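(* If $G$ is a finite group of isometries of the rooted tree $\mathcal T$, then its centralizer $C_W(G)$ in $W=\mathrm{Aut}(\mathcal T)$ is uncountable.
   Context: $\mathcal T=X^*$ is the $d$-regular rooted tree over a finite alphabet $X$ with $d=|X|\ge2$, and $W$ its group of isometries. *)

(* Defs.v *)
From Stdlib Require List.
From mathcomp Require Import all_boot.
Set Implicit Arguments. Unset Strict Implicit. Unset Printing Implicit Defensive.

(* The d-regular rooted tree X^* : vertices are words over the finite
   alphabet X, the root is the empty word [::], and the children of a
   vertex w are the words rcons w x (x \in X). *)
Definition vertex (X : finType) := seq X.

Fixpoint lcp (X : finType) (u v : seq X) : nat :=
  match u, v with
  | x :: u', y :: v' => if x == y then (lcp u' v').+1 else 0
  | _, _ => 0
  end.

Definition tdist (X : finType) (u v : seq X) : nat :=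
  size u + size v - 2 * lcp u v.

(* Isometries of the rooted tree: surjective distance-preserving maps
   fixing the root.  (They are the automorphisms of the rooted tree.) *)
Definition is_isometry (X : finType) (f : seq X -> seq X) : Prop :=
  f [::] = [::] /\
  (forall u v, tdist (f u) (f v) = tdist u v) /\
  (forall v, exists u, f u = v).

Definition finite_isometry_group (X : finType)
    (G : (seq X -> seq X) -> Prop) : Prop :=
  (exists l : seq (seq X -> seq X), forall g, G g -> exists2 h, List.In h l & forall w, h w = g w) /\
  (forall g, G g -> is_isometry g) /\
  G id /\
  (forall g h, G g -> G h -> G (g \o h)) /\
  (forall g, G g -> exists2 h, G h & (forall w, h (g w) = w /\ g (h w) = w)).

Definition centralizer (X : finType) (G : (seq X -> seq X) -> Prop)
    (f : seq X -> seq X) : Prop :=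
  is_isometry f /\ forall g, G g -> forall w, f (g w) = g (f w).

Definition countable_maps (X : finType) (C : (seq X -> seq X) -> Prop) : Prop :=
  exists e : nat -> (seq X -> seq X), forall f, C f -> exists n, forall w, e n w = f w.

(* Main.v *)
Require Import Defs.
From mathcomp Require Import all_boot zify.
From Stdlib Require Import Classical ClassicalEpsilon.
Set Implicit Arguments. Unset Strict Implicit. Unset Printing Implicit Defensive.

Section Lcp.
Variable X : finType.
Implicit Types u v w a b : seq X.

Lemma lcp_nilr u : lcp u [::] = 0. Proof. by case: u. Qed.
Lemma lcp_nill u : lcp [::] u = 0. Proof. by []. Qed.

Lemma lcp_le u v : lcp u v <= minn (size u) (size v).
Proof.
elim: u v => [|x u IH] [|y v] //=.
case: eqP => // _. have := IH v. lia.
Qed.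

Lemma lcp_refl u : lcp u u = size u.
Proof. by elim: u => //= x u ->; rewrite eqxx. Qed.

Lemma lcpC u v : lcp u v = lcp v u.
Proof.
elim: u v => [|x u IH] [|y v] //=.
by rewrite eq_sym; case: eqP => // _; rewrite IH.
Qed.

Lemma lcp_prefix u w : lcp u w = size u -> w = u ++ drop (size u) w.
Proof.
elim: u w => [|x u IH] [|y w] //=.
case: eqP => [-> [] /IH <- //|_ //].
Qed.

Lemma lcp_eq u w : lcp u w = size u -> size u = size w -> u = w.
Proof.
move=> /lcp_prefix E e. by rewrite E e drop_size cats0.
Qed.

Lemma lcp_cat u a b : lcp (u ++ a) (u ++ b) = size u + lcp a b.
Proof. by elim: u => //= x u ->; rewrite eqxx. Qed.

Lemma lcp_cat_prefix v y : lcp v (v ++ y) = size v.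
Proof. by have := lcp_cat v [::] y; rewrite cats0 lcp_nill addn0. Qed.

Lemma lcp_diff v v' y t : size v = size v' -> v <> v' ->
  lcp (v ++ y) (v' ++ t) = lcp v v'.
Proof.
elim: v v' => [|x v IH] [|x' v'] //= [e] ne.
case: eqP => [ex|//]. subst x'. rewrite IH //. by move=> E; apply: ne; rewrite E.
Qed.

Lemma lcp_notprefix v y b : (forall t, b <> v ++ t) -> lcp (v ++ y) b = lcp v b.
Proof.
elim: v b => [|x v IH] b H; first by case: (H b).
case: b H => [|z b] H //=.
case: eqP => [ex|//]. subst z. rewrite IH //. move=> t E; apply: (H t). by rewrite E.
Qed.
End Lcp.

Section Iso.
Variable X : finType.
Implicit Types u v w a b y t : seq X.
Implicit Types f : seq X -> seq X.

Lemma iso_size f : is_isometry f -> forall u, size (f u) = size u.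
Proof.
move=> [f0 [fd _]] u. have := fd u [::]. rewrite f0 /tdist !lcp_nilr /=. lia.
Qed.

Lemma iso_lcp f : is_isometry f -> forall u w, lcp (f u) (f w) = lcp u w.
Proof.
move=> hf u w. have := proj1 (proj2 hf) u w. rewrite /tdist !(iso_size hf).
have := lcp_le (f u) (f w); have := lcp_le u w; rewrite !(iso_size hf). lia.
Qed.

Lemma iso_prefix f v y : is_isometry f ->
  f (v ++ y) = f v ++ drop (size v) (f (v ++ y)).
Proof.
move=> hf. have E : lcp (f v) (f (v ++ y)) = size (f v).
  by rewrite (iso_lcp hf) lcp_cat_prefix (iso_size hf).
by rewrite {1}(lcp_prefix E) (iso_size hf).
Qed.

Lemma iso_prefix_eq f v y t : is_isometry f -> f (v ++ y) = v ++ t -> f v = v.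
Proof.
move=> hf E. have := congr1 (take (size v)) E.
rewrite (iso_prefix v y hf) !take_size_cat //. by rewrite (iso_size hf).
Qed.

Lemma cat_injr v a b : v ++ a = v ++ b -> a = b.
Proof. move=> E. have := congr1 (drop (size v)) E. by rewrite !drop_size_cat. Qed.

Lemma count_le (T : Type) (s : seq T) (a b : pred T) :
  (forall x, List.In x s -> a x -> b x) -> count a s <= count b s.
Proof.
elim: s => [|x s IH] //= H.
have := IH (fun z0 Hz0 => H z0 (or_intror Hz0)).
move: (H x (or_introl erefl)). case: (a x); case: (b x) => //= Hx; try lia; by have := Hx isT.
Qed.

Lemma count_lt (T : Type) (s : seq T) (a b : pred T) :
  (forall x, List.In x s -> a x -> b x) ->
  (exists x, List.In x s /\ b x /\ ~~ a x) -> count a s < count b s.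
Proof.
elim: s => [|x s IH] /= H [z [Hz [bz az]]]; first by [].
have Hs : forall z0 : T, List.In z0 s -> a z0 -> b z0 by move=> z0 Hz0; apply: H; right.
case: Hz => [Ez|Hz].
- subst z. have := count_le Hs. move: az bz. case: (a x); case: (b x) => //= _ _; lia.
- have := IH Hs (ex_intro _ z (conj Hz (conj bz az))).
  move: (H x (or_introl erefl)). case: (a x); case: (b x) => //= Hx; try lia; by have := Hx isT.
Qed.
End Iso.

Section Good.
Variable X : finType.
Variable G : (seq X -> seq X) -> Prop.
Hypothesis hG : finite_isometry_group G.

Lemma Giso g : G g -> is_isometry g. Proof. by case: hG => _ [H _]; apply: H. Qed.

Lemma good_list : exists l : seq (seq X -> seq X),
  (forall g, G g -> exists2 h, List.In h l & forall w, h w = g w) /\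
  (forall h, List.In h l -> G h).
Proof.
case: hG => [[l Hl] _].
suff: exists l', (forall g, G g -> (exists2 h, List.In h l & forall w, h w = g w) ->
                  exists2 h, List.In h l' & forall w, h w = g w) /\
                 (forall h, List.In h l' -> G h).
  by case=> l' [H1 H2]; exists l'; split => // g Gg; apply: H1 => //; apply: Hl.
elim: l {Hl} => [|h l [l' [H1 H2]]].
  by exists [::]; split => // g _ [].
case: (classic (exists g, G g /\ forall w, h w = g w)) => [[g0 [Gg0 E0]]|Hn].
- exists (g0 :: l'); split.
  + move=> g Gg [h' [<-|Hh'] Eh'].
    * by exists g0; [left | move=> w; rewrite -E0].
    * by case: (H1 g Gg (ex_intro2 _ _ h' Hh' Eh')) => h'' ? ?; exists h''; [right|].
  + by move=> h' [<-|/H2].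
- exists l'; split => // g Gg [h' [Eh|Hh'] Eh'].
  + by subst h'; case: Hn; exists g.
  + by apply: H1 => //; exists h'.
Qed.

Definition good (l : seq (seq X -> seq X)) (v : seq X) :=
  forall h, List.In h l -> h v = v -> forall u, h (v ++ u) = v ++ u.

Lemma exists_good l : (forall h, List.In h l -> G h) -> exists v, good l v.
Proof.
move=> Hl.
suff: forall n v, count (fun h => h v == v) l <= n -> exists v, good l v.
  by move/(_ (count (fun h => h [::] == [::]) l) [::]); apply.
elim=> [|n IH] v Hc;
  (case: (classic (exists h u, List.In h l /\ h v = v /\ h (v ++ u) <> v ++ u))
    => [[h [u [Hh [hv hu]]]]|Hno];
  [|by exists v => h Hh hv u; apply: NNPP => hu; apply: Hno; exists h, u]).
all: have Hlt : count (fun h => h (v ++ u) == v ++ u) l < count (fun h => h v == v) l.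
all: try (apply: count_lt; [move=> h' Hh' /eqP E; apply/eqP; exact: iso_prefix_eq (Giso (Hl _ Hh')) E
         | exists h; split => //; split; [exact/eqP| exact/eqP]]).
- by have := leq_trans Hlt Hc.
- apply: (IH (v ++ u)). rewrite -ltnS. exact: leq_trans Hlt Hc.
Qed.
End Good.

Section Main.
Variable X : finType.
Variable G : (seq X -> seq X) -> Prop.
Hypothesis hG : finite_isometry_group G.
Variable l : seq (seq X -> seq X).
Hypothesis Hl1 : forall g, G g -> exists2 h, List.In h l & forall w, h w = g w.
Hypothesis Hl2 : forall h, List.In h l -> G h.
Variable v : seq X.
Hypothesis Hv : good l v.
Variables x0 x1 : X.
Hypothesis hx : x0 != x1.

Lemma Gid : G id. Proof. by case: hG => _ [_ []]. Qed.
Lemma Gcomp g h : G g -> G h -> G (g \o h). Proof. by case: hG => _ [_ [_ [H _]]]; apply: H. Qed.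
Lemma Ginv g : G g -> exists2 h, G h & (forall w, h (g w) = w /\ g (h w) = w).
Proof. by case: hG => _ [_ [_ [_ H]]]; apply: H. Qed.

Lemma stab_fix g : G g -> g v = v -> forall u, g (v ++ u) = v ++ u.
Proof.
move=> Gg gv u. case: (Hl1 Gg) => h Hh E.
rewrite -E. apply: Hv => //. by rewrite E.
Qed.

Lemma wd g1 g2 u1 u2 : G g1 -> G g2 -> g1 (v ++ u1) = g2 (v ++ u2) ->
  u1 = u2 /\ forall y, g1 (v ++ y) = g2 (v ++ y).
Proof.
move=> G1 G2 E. case: (Ginv G2) => k Gk kinv.
have Gc := Gcomp Gk G1.
have Ec : (k \o g1) (v ++ u1) = v ++ u2 by rewrite /= E (proj1 (kinv _)).
have cv := iso_prefix_eq (Giso hG Gc) Ec.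
have Hfix := stab_fix Gc cv.
split.
- apply: (cat_injr (v:=v)). by rewrite -Ec Hfix.
- move=> y. have := Hfix y => /= Hy. by rewrite -{1}(proj2 (kinv (g1 (v ++ y)))) Hy.
Qed.

Definition tau (c : X) := if c == x0 then x1 else if c == x1 then x0 else c.
Lemma tauK c : tau (tau c) = c.
Proof.
rewrite /tau. case: (eqVneq c x0) => [->|n0]; first by rewrite eq_sym (negPf hx) eqxx.
case: (eqVneq c x1) => [->|n1]; first by rewrite eqxx.
by rewrite (negPf n0) (negPf n1).
Qed.
Lemma tau_inj : injective tau. Proof. exact: can_inj tauK. Qed.

Fixpoint asw (s : nat -> bool) (k : nat) (u : seq X) : seq X :=
  match u with [::] => [::] | c :: u' => (if s k then tau c else c) :: asw s k.+1 u' end.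

Lemma size_asw s k u : size (asw s k u) = size u.
Proof. by elim: u k => //= c u IH k; rewrite IH. Qed.

Lemma aswK s k u : asw s k (asw s k u) = u.
Proof. elim: u k => //= c u IH k; rewrite IH. by case: (s k); rewrite ?tauK. Qed.

Lemma lcp_asw s k a b : lcp (asw s k a) (asw s k b) = lcp a b.
Proof.
elim: a k b => [|c a IH] k [|d b] //=.
case: (s k); rewrite ?(inj_eq tau_inj); by case: eqP => // _; rewrite IH.
Qed.

Lemma nth_asw s k m c i : i < m -> nth x0 (asw s k (nseq m c)) i = if s (k + i) then tau c else c.
Proof.
elim: m k i => [|m IH] k [|i] //= Hi. by rewrite addn0.
rewrite IH // addSnnS //.
Qed.

Definition inorb w := exists p : (seq X -> seq X) * seq X, G p.1 /\ w = p.1 (v ++ p.2).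

Definition F s w := match excluded_middle_informative (inorb w) with
 | left H => let p := proj1_sig (constructive_indefinite_description _ H) in p.1 (v ++ asw s 0 p.2)
 | right _ => w end.

Lemma F_orb s g u : G g -> F s (g (v ++ u)) = g (v ++ asw s 0 u).
Proof.
move=> Gg. rewrite /F; case: excluded_middle_informative => [H|H]; last first.
  by exfalso; apply: H; exists (g, u).
case: constructive_indefinite_description => [[g' u'] /= [Gg' E]].
have [eu ey] := wd Gg Gg' E. subst u'. by rewrite ey.
Qed.

Lemma F_out s w : ~ inorb w -> F s w = w.
Proof. by move=> H; rewrite /F; case: excluded_middle_informative. Qed.

Lemma F_size s w : size (F s w) = size w.
Proof.
case: (classic (inorb w)) => [[[g u] /= [Gg ->]]|H]; last by rewrite F_out.
by rewrite F_orb // !(iso_size (Giso hG Gg)) !size_cat size_asw.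
Qed.

Lemma FK s w : F s (F s w) = w.
Proof.
case: (classic (inorb w)) => [[[g u] /= [Gg ->]]|H]; last by rewrite !F_out.
by rewrite !F_orb // aswK.
Qed.

Lemma F_lcp_mixed s g1 u1 b : G g1 -> ~ inorb b ->
  lcp (F s (g1 (v ++ u1))) (F s b) = lcp (g1 (v ++ u1)) b.
Proof.
move=> G1 Hb. rewrite F_orb // F_out //.
case: (Ginv G1) => k Gk kinv. have ik := Giso hG Gk.
rewrite -(iso_lcp ik) -[in RHS](iso_lcp ik) !(proj1 (kinv _)).
have nb : forall t, k b <> v ++ t.
  move=> t E; apply: Hb; exists (g1, t) => /=; split => //.
  by rewrite -E (proj2 (kinv _)).
by rewrite !lcp_notprefix.
Qed.

Lemma F_lcp s a b : lcp (F s a) (F s b) = lcp a b.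
Proof.
case: (classic (inorb a)) => [[[g1 u1] /= [G1 ->]]|Ha];
case: (classic (inorb b)) => [[[g2 u2] /= [G2 ->]]|Hb].
- rewrite !F_orb //.
  case: (Ginv G1) => k Gk kinv. have ik := Giso hG Gk.
  rewrite -(iso_lcp ik) -[in RHS](iso_lcp ik) !(proj1 (kinv _)).
  have Gc := Gcomp Gk G2. have ic := Giso hG Gc.
  change (k (g2 (v ++ asw s 0 u2))) with ((k \o g2) (v ++ asw s 0 u2)).
  change (k (g2 (v ++ u2))) with ((k \o g2) (v ++ u2)).
  case: (eqVneq ((k \o g2) v) v) => [cv|cv].
  + by rewrite !(stab_fix Gc cv) !lcp_cat lcp_asw.
  + rewrite (iso_prefix _ (asw s 0 u2) ic) (iso_prefix _ u2 ic).
    have sz : size v = size ((k \o g2) v) by rewrite (iso_size ic).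
    have ne : v <> (k \o g2) v by move=> E; move: cv; rewrite -E eqxx.
    by rewrite !lcp_diff.
- exact: F_lcp_mixed.
- by rewrite lcpC F_lcp_mixed // lcpC.
- by rewrite !F_out.
Qed.

Lemma F_cent s : centralizer G (F s).
Proof.
split; [split; [|split]|].
- case: (classic (inorb [::])) => [[[g u] /= [Gg E]]|H]; last by rewrite F_out.
  have := congr1 size E. rewrite (iso_size (Giso hG Gg)) size_cat.
  case: u E => [|? ?] E; last by rewrite /=; lia.
  by rewrite E F_orb.
- move=> a b. by rewrite /tdist !F_size F_lcp.
- by move=> w; exists (F s w); rewrite FK.
- move=> g Gg w.
  case: (classic (inorb w)) => [[[g1 u] /= [G1 ->]]|H].
  + have -> : g (g1 (v ++ u)) = (g \o g1) (v ++ u) by [].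
    by rewrite !F_orb //; apply: Gcomp.
  + rewrite !F_out //. case=> [[g2 u]] /= [G2 E]. apply: H.
    case: (Ginv Gg) => k Gk kinv. exists (k \o g2, u) => /=; split; first exact: Gcomp.
    by rewrite -E (proj1 (kinv _)).
Qed.

Lemma main_sec : ~ countable_maps (centralizer G).
Proof.
case=> e He.
pose wn n := v ++ nseq n.+1 x0.
pose s n := nth x0 (e n (wn n)) (size v + n) == x0.
case: (He (F s) (F_cent s)) => n En.
have E := En (wn n).
have E2 : F s (v ++ nseq n.+1 x0) = v ++ asw s 0 (nseq n.+1 x0) := F_orb s (nseq n.+1 x0) Gid.
have Ex : nth x0 (e n (wn n)) (size v + n) = nth x0 (v ++ asw s 0 (nseq n.+1 x0)) (size v + n).
  by rewrite E /wn E2.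
rewrite nth_cat ltnNge leq_addr addKn nth_asw // add0n /= in Ex.
move: Ex. rewrite /s. case: eqP => [->|ne].
- rewrite /tau eqxx => Ex. by move: hx; rewrite Ex eqxx.
- move=> Ex. by apply: ne.
Qed.
End Main.

Theorem theorem3p12 (X : finType) (hX : 2 <= #|X|)
    (G : (seq X -> seq X) -> Prop) :
  finite_isometry_group G -> ~ countable_maps (centralizer G).
Proof.
move=> hG. case: (good_list hG) => l [H1 H2]. case: (exists_good hG H2) => v Hv.
case/card_gt1P: hX => x0 [x1 [_ _ hx]].
exact: (main_sec hG H1 Hv hx).
Qed.
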